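(* For any finite simple graph $X$ and any vertex $v$ of $X$, exactly half of the elements $s=((x_1,k_1),\dots,(x_n,k_n))$ of $\mathrm{Fix}(\mathbf{F}^\uparrow)$ satisfy $x_v=1$.
   Context: Let $X$ be a finite simple graph with vertices $1,\dots,n$; $d(v)$ is the degree of $v$ and $n[v]$ the closed neighborhood of $v$. An extended vertex state is $s_v=(x_v,k_v)\in\{0,1\}\times\{1,\dots,d(v)+1\}$; $\mathcal{S}$ is the product of these sets. Let $\sigma(x[v])=|\{u\in n[v]:x_u=1\}|$. The increasing vertex function maps $(x_v,k_v)$ to $(x_v',k_v')$ with $x_v'=1$ iff $\sigma(x[v])\ge k_v$ (else $0$), and $k_v'=k_v+1$ if $x_v=0$ and $\sigma(x[v])\ge k_v$, else $k_v'=k_v$. $\mathbf{F}^\uparrow:\mathcal{S}\to\mathcal{S}$ applies this vertex function at all vertices simultaneously, and $\mathrm{Fix}(\mathbf{F}^\uparrow)$ is its set of fixed points. *)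

(* Defs.v *)
From mathcomp Require Import all_boot.
Set Implicit Arguments. Unset Strict Implicit. Unset Printing Implicit Defensive.

Definition simple_graph (n : nat) (e : rel 'I_n) : Prop :=
  symmetric e /\ irreflexive e.

Definition deg n (e : rel 'I_n) (v : 'I_n) : nat := #|[set u | e v u]|.

Definition cnbhd n (e : rel 'I_n) (v : 'I_n) : {set 'I_n} :=
  [set u | (u == v) || e v u].

(* Since k_v <= d(v)+1 <= n,
   the values k_v are stored in 'I_n.+1; the extended state space S is the
   subset of those with 1 <= k_v <= d(v)+1 for every v. *)
Definition state n := ({ffun 'I_n -> bool} * {ffun 'I_n -> 'I_n.+1})%type.

Definition in_S n (e : rel 'I_n) (s : state n) : bool :=
  [forall v, (1 <= s.2 v) && (s.2 v <= (deg e v).+1)].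

Definition sigma n (e : rel 'I_n) (x : {ffun 'I_n -> bool}) (v : 'I_n) : nat :=
  #|[set u in cnbhd e v | x u]|.

Definition Fup n (e : rel 'I_n) (s : state n) : state n :=
  ([ffun v => sigma e s.1 v >= s.2 v],
   [ffun v => if ~~ s.1 v && (sigma e s.1 v >= s.2 v)
              then inord (s.2 v).+1 else s.2 v]).

Definition FixFup n (e : rel 'I_n) : {set state n} :=
  [set s | in_S e s && (Fup e s == s)].

(* Main.v *)
Require Import Defs.
From mathcomp Require Import all_boot zify.

Section S.
Variables (n : nat) (e : rel 'I_n).
Hypothesis He : simple_graph e.

Lemma deg_lt u : (deg e u).+1 <= n.
Proof.
have sub : [set w | e u w] \subset [set~ u].
  apply/subsetP=> w; rewrite !inE => Hw; apply/eqP=> Ew; subst w.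
  by move: Hw; rewrite (proj2 He).
have := subset_leq_card sub; rewrite cardsC1 card_ord /deg.
have : 0 < n by case: (u) => m /=; lia.
lia.
Qed.

Lemma card_cn u : #|cnbhd e u| = (deg e u).+1.
Proof.
have -> : cnbhd e u = u |: [set w | e u w].
  by apply/setP=> w; rewrite !inE.
by rewrite cardsU1 inE (proj2 He).
Qed.

Lemma sigma_neg (x : {ffun 'I_n -> bool}) u :
  sigma e [ffun w => ~~ x w] u = (deg e u).+1 - sigma e x u.
Proof.
rewrite /sigma -card_cn -(cardsID [set w | x w] (cnbhd e u)).
have -> : [set w in cnbhd e u | x w] = cnbhd e u :&: [set w | x w].
  by apply/setP=> w; rewrite !inE.
have -> : [set w in cnbhd e u | [ffun w => ~~ x w] w] = cnbhd e u :\: [set w | x w].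
  by apply/setP=> w; rewrite !inE ffunE andbC.
by rewrite addKn.
Qed.

Lemma sigma_le x u : sigma e x u <= (deg e u).+1.
Proof. by rewrite -card_cn; apply: subset_leq_card; apply/subsetP=> w; rewrite inE => /andP[]. Qed.

Lemma fixP s : (s \in FixFup e) = in_S e s && [forall u, s.1 u == (s.2 u <= sigma e s.1 u)].
Proof.
rewrite inE; congr (_ && _).
case: s => x k /=; apply/eqP/forallP => [H u|H].
  case: H => H1 _; by rewrite -{1}H1 ffunE.
have H1 : [ffun v => sigma e x v >= k v] = x.
  by apply/ffunP=> u; rewrite ffunE (eqP (H u)).
congr pair => //; apply/ffunP=> u; rewrite ffunE -(eqP (H u)).
by case: (x u).
Qed.

Definition phi (s : state n) : state n :=
  ([ffun u => ~~ s.1 u], [ffun u => inord ((deg e u).+2 - s.2 u) : 'I_n.+1]).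

Lemma phi_val (s : state n) u : 1 <= s.2 u -> ((phi s).2 u : nat) = (deg e u).+2 - s.2 u.
Proof.
move=> H; rewrite ffunE inordK //; have := deg_lt u; lia.
Qed.

Lemma phi_inS s : in_S e s -> in_S e (phi s).
Proof.
move=> /forallP H; apply/forallP=> u; have /andP[H1 H2] := H u.
by rewrite phi_val //; apply/andP; split; lia.
Qed.

Lemma phiK s : in_S e s -> phi (phi s) = s.
Proof.
move=> /forallP H; case: s H => x k H; congr pair; apply/ffunP=> u.
  by rewrite !ffunE negbK.
have /andP[H1 H2] := H u.
have Hp : 1 <= (phi (x, k)).2 u by rewrite phi_val //; lia.
apply: val_inj; rewrite /=;
rewrite (phi_val (phi (x,k)) u Hp) (phi_val (x,k) u H1) /=.
move: H1 H2 => /= H1 H2; lia.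
Qed.

Lemma phi_fix s : s \in FixFup e -> phi s \in FixFup e.
Proof.
rewrite !fixP => /andP[HS /forallP H]; rewrite phi_inS //=.
move/forallP: HS => HS; apply/forallP=> u.
have /andP[H1 H2] := HS u; have := H u.
rewrite ffunE sigma_neg (phi_val s u H1) /=.
have := sigma_le s.1 u.
case: (s.1 u) => /= Hs /eqP E; apply/eqP; lia.
Qed.

End S.

Theorem lemma4p2 (n : nat) (e : rel 'I_n) (v : 'I_n) :
  simple_graph e ->
  2 * #|[set s in FixFup e | s.1 v]| = #|FixFup e|.
Proof.
move=> He.
set A := [set s in FixFup e | s.1 v].
have inS s : s \in FixFup e -> in_S e s by rewrite inE => /andP[].
have EB : (@phi n e) @: A = FixFup e :\: A.
  apply/setP=> s; apply/imsetP/idP.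
    move=> [t]; rewrite inE => /andP[Ht Hv] ->.
    have := @phi_fix n e He _ Ht; rewrite !inE => /andP[-> ->]; by rewrite /= ffunE Hv.
  rewrite in_setD => /andP[Hn Hs]; exists ((@phi n e) s); last by rewrite (@phiK n e He _ (inS _ Hs)).
  have := @phi_fix n e He _ Hs; rewrite !inE => /andP[-> ->]; by rewrite /= ffunE; move: Hn; rewrite inE Hs.
have cB : #|FixFup e :\: A| = #|A|.
  rewrite -EB card_in_imset // => s t; rewrite !inE => /andP[/andP[Hs _] _] /andP[/andP[Ht _] _] E.
  by rewrite -((@phiK n e He _ Hs)) E phiK // inS.
have := cardsID A (FixFup e).
have -> : FixFup e :&: A = A by apply/setIidPr/subsetP=> s; rewrite inE => /andP[].
by rewrite cB => <-; rewrite mul2n addnn.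
Qed.
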